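(* Let $\mathcal B$ be a symmetric bilinear form on a vector space $A$ and $s\in A$ a fixed vector. Define $\circ:A\otimes A\to A$ by $x\circ y=\mathcal B(x,y)s-\mathcal B(x,s)y$. Then $(A,\circ)$ is an anti-pre-Lie algebra. Moreover, $\mathcal B$ is invariant on $(A,\circ)$, i.e. $\mathcal B(x\circ y,z)=\mathcal B(y,[x,z])$ for all $x,y,z\in A$ where $[x,z]=x\circ z-z\circ x$, and hence $\mathcal B$ is a commutative 2-cocycle on the Lie algebra $(A,[-,-])$.
   Context: All vector spaces are finite-dimensional over a field $\mathbb F$ of characteristic $0$. An anti-pre-Lie algebra is a vector space $A$ with a bilinear operation $\circ$ such that, writing $[x,y]=x\circ y-y\circ x$, for all $x,y,z\in A$: (i) $x\circ(y\circ z)-y\circ(x\circ z)=[y,x]\circ z$, and (ii) $[x,y]\circ z+[y,z]\circ x+[z,x]\circ y=0$. A commutative 2-cocycle on a Lie algebra is a symmetric bilinear form $\mathcal B$ with $\mathcal B([x,y],z)+\mathcal B([y,z],x)+\mathcal B([z,x],y)=0$. *)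

(* Defs.v *)
From mathcomp Require Import all_boot all_algebra.
Set Implicit Arguments. Unset Strict Implicit. Unset Printing Implicit Defensive.
Import GRing.Theory.
Local Open Scope ring_scope.

Definition commut (V : zmodType) (op : V -> V -> V) (x y : V) : V :=
  op x y - op y x.

Definition bilin_form (F : fieldType) (V : vectType F) (B : V -> V -> F) :=
  (forall (a : F) x y z, B (a *: x + y) z = a * B x z + B y z) /\
  (forall (a : F) x y z, B x (a *: y + z) = a * B x y + B x z).

Definition bilinear_op (F : fieldType) (V : vectType F) (op : V -> V -> V) :=
  (forall (a : F) x y z, op (a *: x + y) z = a *: op x z + op y z) /\
  (forall (a : F) x y z, op x (a *: y + z) = a *: op x y + op x z).

Definition symm_form (F : fieldType) (V : vectType F) (B : V -> V -> F) :=
  forall x y, B x y = B y x.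

Definition anti_pre_Lie (F : fieldType) (V : vectType F) (op : V -> V -> V) :=
  bilinear_op op /\
  (forall x y z, op x (op y z) - op y (op x z) = op (commut op y x) z) /\
  (forall x y z, op (commut op x y) z + op (commut op y z) x
                 + op (commut op z x) y = 0).

Definition invariant_form (F : fieldType) (V : vectType F)
  (op : V -> V -> V) (B : V -> V -> F) :=
  forall x y z, B (op x y) z = B y (commut op x z).

Definition comm_2_cocycle (F : fieldType) (V : vectType F)
  (br : V -> V -> V) (B : V -> V -> F) :=
  symm_form B /\
  forall x y z, B (br x y) z + B (br y z) x + B (br z x) y = 0.

Definition Bop (F : fieldType) (V : vectType F) (B : V -> V -> F) (s : V)
  (x y : V) : V := B x y *: s - B x s *: y.

(* Main.v *)
Require Import Defs.
From mathcomp Require Import all_boot all_algebra.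
From mathcomp Require Import ring.
Import GRing.Theory.
Local Open Scope ring_scope.

Section Aux.
Variables (F : fieldType) (V : vectType F).

Definition lc4 (u1 u2 u3 u4 : V) (a b c d : F) : V :=
  a *: u1 + b *: u2 + c *: u3 + d *: u4.
Section L.
Variables u1 u2 u3 u4 : V.
Lemma lc4D a b c d a' b' c' d' :
  lc4 u1 u2 u3 u4 a b c d + lc4 u1 u2 u3 u4 a' b' c' d'
  = lc4 u1 u2 u3 u4 (a + a') (b + b') (c + c') (d + d').
Proof.
rewrite /lc4 addrACA -scalerDl; congr (_ + _).
rewrite addrACA -scalerDl; congr (_ + _).
by rewrite addrACA -!scalerDl.
Qed.
Lemma lc4N a b c d : - lc4 u1 u2 u3 u4 a b c d = lc4 u1 u2 u3 u4 (-a) (-b) (-c) (-d).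
Proof. by rewrite /lc4 !opprD !scaleNr. Qed.
Lemma lc4Z k a b c d : k *: lc4 u1 u2 u3 u4 a b c d = lc4 u1 u2 u3 u4 (k*a) (k*b) (k*c) (k*d).
Proof. by rewrite /lc4 !scalerDr !scalerA. Qed.
Lemma lc4_1 a : a *: u1 = lc4 u1 u2 u3 u4 a 0 0 0.
Proof. by rewrite /lc4 !scale0r !addr0. Qed.
Lemma lc4_2 a : a *: u2 = lc4 u1 u2 u3 u4 0 a 0 0.
Proof. by rewrite /lc4 !scale0r !addr0 add0r. Qed.
Lemma lc4_3 a : a *: u3 = lc4 u1 u2 u3 u4 0 0 a 0.
Proof. by rewrite /lc4 !scale0r !addr0 add0r. Qed.
Lemma lc4_4 a : a *: u4 = lc4 u1 u2 u3 u4 0 0 0 a.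
Proof. by rewrite /lc4 !scale0r !add0r. Qed.
Lemma lc4_0 : 0 = lc4 u1 u2 u3 u4 0 0 0 0.
Proof. by rewrite /lc4 !scale0r !add0r. Qed.
End L.

Variable B : V -> V -> F.
Hypothesis hB : bilin_form B.
Hypothesis hS : symm_form B.

Lemma B0l z : B 0 z = 0.
Proof.
have := (proj1 hB) 1 0 0 z; rewrite scaler0 addr0 mul1r => h.
by apply/(addrI (B 0 z)); rewrite -h addr0.
Qed.
Lemma BDl x y z : B (x + y) z = B x z + B y z.
Proof. by have := (proj1 hB) 1 x y z; rewrite scale1r mul1r. Qed.
Lemma BZl a x z : B (a *: x) z = a * B x z.
Proof. by have := (proj1 hB) a x 0 z; rewrite addr0 B0l addr0. Qed.
Lemma BNl x z : B (- x) z = - B x z.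
Proof. by rewrite -scaleN1r BZl mulN1r. Qed.
Lemma BDr x y z : B z (x + y) = B z x + B z y.
Proof. by rewrite hS BDl !(hS z). Qed.
Lemma BZr a x z : B z (a *: x) = a * B z x.
Proof. by rewrite hS BZl (hS z). Qed.
Lemma BNr x z : B z (- x) = - B z x.
Proof. by rewrite hS BNl (hS z). Qed.

End Aux.
Arguments lc4_1 {F V}. Arguments lc4_2 {F V}. Arguments lc4_3 {F V}. Arguments lc4_4 {F V}. Arguments lc4_0 {F V}.

Theorem proposition2p27 (F : fieldType) (V : vectType F)
  (B : V -> V -> F) (s : V) :
  (forall p : nat, p \notin GRing.pchar F) ->
  bilin_form B -> symm_form B ->
  anti_pre_Lie (Bop B s) /\ invariant_form (Bop B s) B /\
  comm_2_cocycle (commut (Bop B s)) B.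
Proof.
move=> _ hB hS.
have Bsimp := (@BDl _ _ B hB, @BZl _ _ B hB, @BNl _ _ B hB, @BDr _ _ B hB hS, @BZr _ _ B hB hS, @BNr _ _ B hB hS).
have Hc : forall x y, commut (Bop B s) x y = B y s *: x - B x s *: y.
  move=> x y; rewrite /commut /Bop (hS y x).
  by rewrite opprB addrC addrA subrK.
have Bsimp2 := (@BDl _ _ B hB, @BZl _ _ B hB, @BNl _ _ B hB).
split; last split.
- split; last split.
  + split.
    * move=> a x y z; rewrite /Bop !Bsimp2.
      rewrite !(lc4_1 s x y z) !(lc4_4 s x y z) !(lc4N, lc4Z, lc4D).
      congr lc4; ring.
    * move=> a x y z; rewrite /Bop !Bsimp.
      rewrite ?scalerDr ?scalerBr ?scalerA !(lc4_1 s x y z) ?(lc4_2 s x y z) ?(lc4_3 s x y z) !(lc4_4 s x y z) !(lc4N, lc4Z, lc4D).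
      congr lc4; ring.
  + move=> x y z; rewrite Hc /Bop !Bsimp.
      rewrite ?scalerDr ?scalerBr ?scalerA !(lc4_1 s x y z) ?(lc4_2 s x y z) ?(lc4_3 s x y z) !(lc4_4 s x y z) !(lc4N, lc4Z, lc4D).
    congr lc4; rewrite ?(hS z s) ?(hS x s) ?(hS y s) ?(hS x z) ?(hS y z) ?(hS x y); ring.
  + move=> x y z; rewrite !Hc /Bop !Bsimp.
      rewrite ?scalerDr ?scalerBr ?scalerA !(lc4_1 s x y z) ?(lc4_2 s x y z) ?(lc4_3 s x y z) !(lc4_4 s x y z) !(lc4N, lc4Z, lc4D).
    rewrite (lc4_0 s x y z).
    congr lc4; rewrite ?(hS z s) ?(hS x s) ?(hS y s) ?(hS x z) ?(hS y z) ?(hS x y); ring.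
- move=> x y z; rewrite Hc /Bop !Bsimp.
  rewrite (hS y x) (hS z s) (hS y z); ring.
- split=> // x y z; rewrite !Hc !Bsimp.
  rewrite (hS y x) (hS z x) (hS z y); ring.
Qed.
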